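(* Let $\rho=\rho^{ABC}$ be as follows: $A$ is $d$-dimensional, $B=B_1B_2$ with $B_1$ finite-dimensional and $B_2$ a qubit, $C$ a qubit, and $$\rho^{ABC}=p_1\,\rho_1^{AB_1}\otimes|\Psi^+\rangle\langle\Psi^+|^{B_2C}+p_2\,\rho_2^{AB_1}\otimes|\Psi^-\rangle\langle\Psi^-|^{B_2C},$$ with states $\rho_1^{AB_1},\rho_2^{AB_1}$, probabilities $p_1+p_2=1$, and $|\Psi^\pm\rangle=(|01\rangle\pm|10\rangle)/\sqrt2$. Then $S(\rho^{AB})\ge S(\rho^{ABC})$, where $\rho^{AB}=\mathrm{Tr}_C\rho^{ABC}$ and $S$ is the von Neumann entropy (base 2). Moreover, if $S(\rho^{AB})=S(\rho^{ABC})$, then $\rho_1^{AB_1}=\rho_2^{AB_1}$, $p_1=p_2=\tfrac12$, and $\rho^{ABC}$ is separable with respect to the bipartition $AB|C$. Consequently (using that $S(\rho^{AB})>S(\rho^{ABC})$ implies distillability across $AB|C$), no such state is bound entangled across $AB|C$.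
   Context: $S(\rho)=-\mathrm{Tr}\,\rho\log_2\rho$. A state is bound entangled across a cut if it is entangled across that cut but not distillable. *)

(* Defs.v *)
From Stdlib Require Import Reals Lra Lia.
Open Scope R_scope.

Definition C : Type := (R * R)%type.
Definition C0 : C := (0, 0).
Definition C1 : C := (1, 0).
Definition RtoC (x : R) : C := (x, 0).
Definition Cadd (z w : C) : C := (fst z + fst w, snd z + snd w).
Definition Cmul (z w : C) : C :=
  (fst z * fst w - snd z * snd w, fst z * snd w + snd z * fst w).
Definition Cconj (z : C) : C := (fst z, - snd z).

Fixpoint Csum (n : nat) (f : nat -> C) : C :=
  match n with O => C0 | S k => Cadd (Csum k f) (f k) end.
Fixpoint Rsum (n : nat) (f : nat -> R) : R :=
  match n with O => 0 | S k => Rsum k f + f k end.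

(* ---------- matrices: entries indexed by nat; only indices < n matter ---------- *)
Definition Mat : Type := nat -> nat -> C.
Definition Vec : Type := nat -> C.

Definition meq (n : nat) (A B : Mat) : Prop :=
  forall i j, (i < n)%nat -> (j < n)%nat -> A i j = B i j.

Definition mmul (n : nat) (A B : Mat) : Mat :=
  fun i j => Csum n (fun k => Cmul (A i k) (B k j)).
Definition madd (A B : Mat) : Mat := fun i j => Cadd (A i j) (B i j).
Definition mscale (a : R) (A : Mat) : Mat := fun i j => Cmul (RtoC a) (A i j).
Definition adjoint (A : Mat) : Mat := fun i j => Cconj (A j i).
Definition idm : Mat := fun i j => if Nat.eqb i j then C1 else C0.
Definition diagm (lam : nat -> R) : Mat :=
  fun i j => if Nat.eqb i j then RtoC (lam i) else C0.
Definition trace (n : nat) (A : Mat) : C := Csum n (fun i => A i i).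
Definition msum (K : nat) (F : nat -> Mat) : Mat :=
  fun i j => Csum K (fun k => F k i j).

(* Kronecker product A (x) B where B acts on an m-dimensional factor;
   composite index i = iA * m + iB (first factor most significant). *)
Definition kron (m : nat) (A B : Mat) : Mat :=
  fun i j => Cmul (A (i / m)%nat (j / m)%nat) (B (i mod m)%nat (j mod m)%nat).

Definition ptrace (m : nat) (A : Mat) : Mat :=
  fun i j => Csum m (fun k => A (i * m + k)%nat (j * m + k)%nat).

Definition proj (v : Vec) : Mat := fun i j => Cmul (v i) (Cconj (v j)).

Definition hermitian (n : nat) (A : Mat) : Prop := meq n (adjoint A) A.
Definition psd (n : nat) (A : Mat) : Prop :=
  forall v : Vec,
    0 <= fst (Csum n (fun i => Cmul (Cconj (v i)) (Csum n (fun j => Cmul (A i j) (v j))))).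
Definition density (n : nat) (A : Mat) : Prop :=
  hermitian n A /\ psd n A /\ trace n A = C1.

Definition unitary (n : nat) (U : Mat) : Prop := meq n (mmul n U (adjoint U)) idm.

Definition log2 (x : R) : R := ln x / ln 2.
Definition plogp (x : R) : R := if Req_EM_T x 0 then 0 else x * log2 x.

(* is_entropy n A s : s = S(A) = - Tr A log2 A, computed from a spectral
   decomposition A = U diag(lam) U^dagger (the eigenvalue multiset, hence s,
   is uniquely determined by A). *)
Definition is_entropy (n : nat) (A : Mat) (s : R) : Prop :=
  exists (U : Mat) (lam : nat -> R),
    unitary n U /\ meq n A (mmul n (mmul n U (diagm lam)) (adjoint U)) /\
    s = - Rsum n (fun i => plogp (lam i)).

Definition separable (nX nY : nat) (rho : Mat) : Prop :=
  exists (K : nat) (q : nat -> R) (sigma tau : nat -> Mat),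
    (forall k, (k < K)%nat -> 0 <= q k /\ density nX (sigma k) /\ density nY (tau k)) /\
    Rsum K q = 1 /\
    meq (nX * nY) rho (msum K (fun k => mscale (q k) (kron nY (sigma k) (tau k)))).

(* basis index of |xy> is 2x+y *)
Definition psi_vec (sgn : R) : Vec :=
  fun i => match i with
           | 1%nat => RtoC (/ sqrt 2)
           | 2%nat => RtoC (sgn / sqrt 2)
           | _ => C0
           end.
Definition psi_plus : Vec := psi_vec 1.
Definition psi_minus : Vec := psi_vec (-1).

(* rho^{ABC} = p1 rho1^{AB1} (x) |Psi+><Psi+|^{B2C} + p2 rho2^{AB1} (x) |Psi-><Psi-|^{B2C},
   factor order A, B1, B2, C. *)
Definition rhoABC (p1 p2 : R) (rho1 rho2 : Mat) : Mat :=
  madd (mscale p1 (kron 4 rho1 (proj psi_plus)))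
       (mscale p2 (kron 4 rho2 (proj psi_minus))).

(* Main.v *)
Require Import Defs.
From Stdlib Require Import Reals Lra Lia.
Open Scope R_scope.
Notation CC := Defs.C.

Lemma Cext : forall z w : CC, fst z = fst w -> snd z = snd w -> z = w.
Proof. intros [a b] [c e]; simpl; intros; subst; auto. Qed.

Ltac cunf := unfold Cadd, Cmul, Cconj, Defs.C0, Defs.C1, RtoC in *; simpl in *.
Ltac ceq := apply Cext; cunf; unfold Rdiv; ring.

Lemma Csum_ext : forall n f g, (forall i, (i < n)%nat -> f i = g i) -> Csum n f = Csum n g.
Proof. induction n; intros; simpl; auto. rewrite (IHn f g); [|intros; apply H; lia]. rewrite (H n); auto. Qed.

Lemma Csum_add : forall n f g, Csum n (fun i => Cadd (f i) (g i)) = Cadd (Csum n f) (Csum n g).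
Proof. induction n; intros; simpl. ceq. rewrite IHn. ceq. Qed.

Lemma Csum_scal_l : forall n c f, Csum n (fun i => Cmul c (f i)) = Cmul c (Csum n f).
Proof. induction n; intros; simpl. ceq. rewrite IHn. ceq. Qed.

Lemma Csum_scal_r : forall n c f, Csum n (fun i => Cmul (f i) c) = Cmul (Csum n f) c.
Proof. induction n; intros; simpl. ceq. rewrite IHn. ceq. Qed.

Lemma Csum_zero : forall n f, (forall i, (i < n)%nat -> f i = C0) -> Csum n f = C0.
Proof. induction n; intros; simpl; auto. rewrite IHn, H; [ceq|lia|intros; apply H; lia]. Qed.

Lemma Csum_swap : forall n m (f : nat -> nat -> CC),
  Csum n (fun i => Csum m (fun j => f i j)) = Csum m (fun j => Csum n (fun i => f i j)).
Proof. induction n; intros; simpl. rewrite Csum_zero; auto. rewrite IHn, <- Csum_add. auto. Qed.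

Lemma Csum_plus : forall n m f, Csum (n + m) f = Cadd (Csum n f) (Csum m (fun i => f (n + i)%nat)).
Proof. intros n m; revert n; induction m; intros; simpl.
 rewrite Nat.add_0_r; ceq. rewrite Nat.add_succ_r; simpl. rewrite IHm. ceq. Qed.

Lemma Csum_mul : forall n m f, Csum (n * m) f = Csum n (fun a => Csum m (fun x => f (a * m + x)%nat)).
Proof. induction n; intros; simpl; auto. replace (m + n * m)%nat with (n * m + m)%nat by lia.
 rewrite Csum_plus, IHn. auto. Qed.

Lemma Csum_delta : forall n i f, (i < n)%nat ->
  Csum n (fun j => if Nat.eqb i j then f j else C0) = f i.
Proof. induction n; intros; [lia|]. simpl. destruct (Nat.eq_dec i n).
 - subst. rewrite Csum_zero. rewrite Nat.eqb_refl. ceq. intros j Hj. destruct (Nat.eqb_spec n j); [lia|auto].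
 - rewrite IHn by lia. destruct (Nat.eqb_spec i n); [lia|]. ceq. Qed.

Lemma Csum_delta' : forall n i f, (i < n)%nat ->
  Csum n (fun j => if Nat.eqb j i then f j else C0) = f i.
Proof. intros. rewrite <- (Csum_delta n i f H). apply Csum_ext. intros. rewrite Nat.eqb_sym; auto. Qed.

Lemma Rsum_ext : forall n f g, (forall i, (i < n)%nat -> f i = g i) -> Rsum n f = Rsum n g.
Proof. induction n; intros; simpl; auto. rewrite (IHn f g); [|intros; apply H; lia]. rewrite (H n); auto. Qed.

Lemma fst_Csum : forall n f, fst (Csum n f) = Rsum n (fun i => fst (f i)).
Proof. induction n; intros; simpl; auto. rewrite IHn; auto. Qed.
Lemma snd_Csum : forall n f, snd (Csum n f) = Rsum n (fun i => snd (f i)).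
Proof. induction n; intros; simpl; auto. rewrite IHn; auto. Qed.
Lemma Cconj_Csum : forall n f, Cconj (Csum n f) = Csum n (fun i => Cconj (f i)).
Proof. induction n; intros; simpl. ceq. rewrite <- IHn. ceq. Qed.

Lemma Rsum_add : forall n f g, Rsum n (fun i => f i + g i) = Rsum n f + Rsum n g.
Proof. induction n; intros; simpl. ring. rewrite IHn. ring. Qed.
Lemma Rsum_scal : forall n c f, Rsum n (fun i => c * f i) = c * Rsum n f.
Proof. induction n; intros; simpl. ring. rewrite IHn. ring. Qed.
Lemma Rsum_swap : forall n m (f : nat -> nat -> R),
  Rsum n (fun i => Rsum m (fun j => f i j)) = Rsum m (fun j => Rsum n (fun i => f i j)).
Proof. induction n; intros; simpl. clear. induction m; simpl; auto. rewrite <- IHm; ring.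
 rewrite IHn, <- Rsum_add. auto. Qed.
Lemma Rsum_le : forall n f g, (forall i, (i < n)%nat -> f i <= g i) -> Rsum n f <= Rsum n g.
Proof. induction n; intros; simpl. lra. apply Rplus_le_compat. apply IHn; intros; apply H; lia. apply H; lia. Qed.
Lemma Rsum_nonneg : forall n f, (forall i, (i < n)%nat -> 0 <= f i) -> 0 <= Rsum n f.
Proof. induction n; intros; simpl. lra. assert (0 <= Rsum n f) by (apply IHn; intros; apply H; lia).
 assert (0 <= f n) by (apply H; lia). lra. Qed.
Lemma Rsum_zero_each : forall n f, (forall i, (i < n)%nat -> 0 <= f i) -> Rsum n f = 0 ->
  forall i, (i < n)%nat -> f i = 0.
Proof. induction n; intros; simpl in *. lia.
 assert (0 <= Rsum n f) by (apply Rsum_nonneg; intros; apply H; lia).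
 assert (0 <= f n) by (apply H; lia).
 destruct (Nat.eq_dec i n). subst; lra. apply IHn; [intros; apply H; lia| lra | lia]. Qed.
Lemma Rsum_minus : forall n f g, Rsum n (fun i => f i - g i) = Rsum n f - Rsum n g.
Proof. induction n; intros; simpl. ring. rewrite IHn. ring. Qed.
Lemma Rsum_le_eq : forall n f g, (forall i, (i < n)%nat -> f i <= g i) -> Rsum n f = Rsum n g ->
  forall i, (i < n)%nat -> f i = g i.
Proof. intros. assert (Rsum n (fun i => g i - f i) = 0) by (rewrite Rsum_minus; lra).
 pose proof (Rsum_zero_each n (fun i => g i - f i)). simpl in H3.
 assert (g i - f i = 0). apply H3; auto. intros; specialize (H i0 H4); lra. lra. Qed.
Definition inner n (x y : Vec) : CC := Csum n (fun i => Cmul (Cconj (x i)) (y i)).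
Definition qf n (A : Mat) (v : Vec) : R :=
  fst (Csum n (fun i => Cmul (Cconj (v i)) (Csum n (fun j => Cmul (A i j) (v j))))).
Definition cn2 (z : CC) : R := fst z * fst z + snd z * snd z.
Definition col (U : Mat) (l : nat) : Vec := fun j => U j l.

Lemma cn2_nonneg : forall z, 0 <= cn2 z.
Proof. intros; unfold cn2; nra. Qed.

Lemma Csum_eq_scal : forall n c f g, (forall i, (i < n)%nat -> f i = Cmul c (g i)) ->
  Csum n f = Cmul c (Csum n g).
Proof. intros. rewrite <- Csum_scal_l. apply Csum_ext; auto. Qed.

Lemma entry_UDU : forall n U lam i j,
  mmul n (mmul n U (diagm lam)) (adjoint U) i j =
  Csum n (fun l => Cmul (Cmul (U i l) (RtoC (lam l))) (Cconj (U j l))).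
Proof. intros. unfold mmul at 1. apply Csum_ext; intros k Hk.
 unfold mmul, diagm, adjoint.
 rewrite (Csum_ext n _ (fun p => if Nat.eqb p k then Cmul (U i p) (RtoC (lam p)) else C0)).
 rewrite Csum_delta' by auto. auto.
 intros p Hp. destruct (Nat.eqb p k); auto. ceq. Qed.

Lemma spec_qf : forall n U lam x,
  qf n (mmul n (mmul n U (diagm lam)) (adjoint U)) x =
  Rsum n (fun l => lam l * cn2 (inner n (col U l) x)).
Proof. intros. unfold qf.
 rewrite (Csum_ext n _ (fun i => Csum n (fun l => Cmul (Cmul (Cconj (x i)) (U i l))
     (Cmul (RtoC (lam l)) (inner n (col U l) x))))).
 2:{ intros i Hi. rewrite (Csum_ext n _ (fun j => Csum n (fun l =>
       Cmul (Cmul (U i l) (RtoC (lam l))) (Cmul (Cconj (U j l)) (x j))))).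
   2:{ intros j Hj. rewrite entry_UDU, <- Csum_scal_r. apply Csum_ext; intros; ceq. }
   rewrite Csum_swap, <- Csum_scal_l. apply Csum_ext; intros l Hl.
   unfold inner, col. rewrite <- Csum_scal_l.
   match goal with |- _ = Cmul ?a (Cmul ?b (Csum ?n ?g)) => transitivity (Cmul (Cmul a b) (Csum n g)); [|ceq] end.
   apply Csum_eq_scal; intros; ceq. }
 rewrite Csum_swap. rewrite fst_Csum. apply Rsum_ext; intros l Hl.
 rewrite Csum_scal_r.
 replace (Csum n (fun i => Cmul (Cconj (x i)) (U i l))) with (Cconj (inner n (col U l) x)).
 2:{ unfold inner, col. rewrite Cconj_Csum. apply Csum_ext; intros; ceq. }
 unfold cn2. cunf. ring. Qed.
Lemma Csum_mul_Csum : forall n m f g, Cmul (Csum n f) (Csum m g) =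
  Csum n (fun k => Csum m (fun l => Cmul (f k) (g l))).
Proof. intros. rewrite <- Csum_scal_r. apply Csum_ext; intros. rewrite Csum_scal_l; auto. Qed.

Lemma Rsum_delta : forall n i f, (i < n)%nat ->
  Rsum n (fun j => if Nat.eqb i j then f j else 0) = f i.
Proof. intros. pose proof (Csum_delta n i (fun j => RtoC (f j)) H).
 apply (f_equal fst) in H0. rewrite fst_Csum in H0. transitivity (fst (RtoC (f i))); [|reflexivity]. rewrite <- H0. apply Rsum_ext; intros.
 destruct (Nat.eqb i i0); auto. Qed.

Lemma Rsum_const : forall n c, Rsum n (fun _ => c) = INR n * c.
Proof. induction n; intros; simpl. ring. rewrite IHn. destruct n; simpl; ring. Qed.

Lemma unitary_entry : forall n U, unitary n U -> forall k l, (k < n)%nat -> (l < n)%nat ->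
  Csum n (fun j => Cmul (U k j) (Cconj (U l j))) = idm k l.
Proof. intros. rewrite <- (H k l H0 H1). unfold mmul, adjoint. auto. Qed.

Lemma cn2_zero : forall z, cn2 z = 0 -> z = C0.
Proof. intros [a b]; unfold cn2; simpl; intros. unfold C0. f_equal; nra. Qed.

Lemma gram : forall n U, unitary n U -> meq n (mmul n (adjoint U) U) idm.
Proof. intros n U HU.
 set (G := fun i j => Csum n (fun k => Cmul (Cconj (U k i)) (U k j))).
 assert (Ga : forall i, (i < n)%nat -> Csum n (fun j => Cmul (G i j) (G j i)) = G i i).
 { intros i Hi. unfold G.
   rewrite (Csum_ext n _ (fun j => Csum n (fun k => Csum n (fun l =>
      Cmul (Cmul (Cconj (U k i)) (U l i)) (Cmul (U k j) (Cconj (U l j))))))).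
   2:{ intros j Hj. rewrite Csum_mul_Csum. apply Csum_ext; intros; apply Csum_ext; intros; ceq. }
   rewrite Csum_swap. apply Csum_ext; intros k Hk. rewrite Csum_swap.
   rewrite (Csum_ext n _ (fun l => if Nat.eqb k l then Cmul (Cconj (U k i)) (U l i) else C0)).
   rewrite Csum_delta; auto.
   intros l Hl. rewrite Csum_scal_l, unitary_entry; auto. unfold idm.
   destruct (Nat.eqb k l); ceq. }
 assert (Gb : forall i j, G j i = Cconj (G i j)).
 { intros; unfold G. rewrite Cconj_Csum. apply Csum_ext; intros; ceq. }
 assert (Gc : Rsum n (fun i => fst (G i i)) = INR n).
 { rewrite <- fst_Csum. unfold G. rewrite Csum_swap.
   rewrite (Csum_ext n _ (fun k => RtoC 1)). rewrite fst_Csum. simpl. rewrite Rsum_const. ring.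
   intros k Hk. rewrite <- (Csum_ext n (fun j => Cmul (U k j) (Cconj (U k j)))).
   rewrite unitary_entry; auto. unfold idm; rewrite Nat.eqb_refl; auto. intros; ceq. }
 assert (Hin : forall i, (i < n)%nat ->
   Rsum n (fun j => cn2 (Cadd (idm i j) (Cmul (RtoC (-1)) (G i j)))) = 1 - fst (G i i)).
 { intros i Hi.
   rewrite (Rsum_ext n _ (fun j => fst (Cmul (G i j) (G j i)) +
        (if Nat.eqb i j then 1 - 2 * fst (G j j) else 0))).
   rewrite Rsum_add, <- fst_Csum, Ga, Rsum_delta; auto. ring.
   intros j Hj. rewrite (Gb i j). unfold idm. destruct (Nat.eqb_spec i j).
   subst. unfold cn2. cunf. ring. unfold cn2; cunf; ring. }
 assert (Htot : Rsum n (fun i => Rsum n (fun j => cn2 (Cadd (idm i j) (Cmul (RtoC (-1)) (G i j))))) = 0).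
 { rewrite (Rsum_ext n _ (fun i => 1 - fst (G i i))) by auto.
   rewrite Rsum_minus, Gc, Rsum_const. ring. }
 intros i j Hi Hj.
 assert (Hi0 := Rsum_zero_each n _ (fun i _ => Rsum_nonneg n _ (fun j _ => cn2_nonneg _)) Htot i Hi).
 simpl in Hi0.
 assert (Hij := Rsum_zero_each n _ (fun j _ => cn2_nonneg _) Hi0 j Hj). simpl in Hij.
 apply cn2_zero in Hij. change (G i j = idm i j).
 assert (Hf := f_equal fst Hij). assert (Hs := f_equal snd Hij).
 apply Cext; cunf; lra.
Qed.
Lemma qf_meq : forall n A B x, meq n A B -> qf n A x = qf n B x.
Proof. intros. unfold qf. f_equal. apply Csum_ext; intros. f_equal. apply Csum_ext; intros.
 rewrite H; auto. Qed.

Lemma qf_ext : forall n A x y, (forall i, (i < n)%nat -> x i = y i) -> qf n A x = qf n A y.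
Proof. intros. unfold qf. f_equal. apply Csum_ext; intros. rewrite H by auto. f_equal.
 apply Csum_ext; intros. rewrite H; auto. Qed.

Lemma qf_idm : forall n x, qf n idm x = Rsum n (fun j => cn2 (x j)).
Proof. intros. unfold qf. rewrite fst_Csum. apply Rsum_ext; intros i Hi.
 rewrite (Csum_ext n _ (fun j => if Nat.eqb i j then x j else C0)).
 rewrite Csum_delta; auto. unfold cn2; cunf; ring.
 intros j Hj. unfold idm. destruct (Nat.eqb i j); ceq. Qed.

Section Spec.
Variable n : nat.
Variable U : Mat.
Variable lam : nat -> R.
Variable A : Mat.
Hypothesis HU : unitary n U.
Hypothesis HA : meq n A (mmul n (mmul n U (diagm lam)) (adjoint U)).

Lemma spec_ortho : forall l i, (l < n)%nat -> (i < n)%nat -> inner n (col U l) (col U i) = idm l i.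
Proof. intros. rewrite <- (gram n U HU l i H H0). unfold mmul, adjoint, inner, col. auto. Qed.

Lemma spec_parseval : forall x, Rsum n (fun l => cn2 (inner n (col U l) x)) = Rsum n (fun j => cn2 (x j)).
Proof. intros. pose proof (spec_qf n U (fun _ => 1) x).
 rewrite (Rsum_ext n _ (fun l => 1 * cn2 (inner n (col U l) x))) by (intros; ring).
 rewrite <- H, <- qf_idm. apply qf_meq. intros i j Hi Hj. rewrite entry_UDU.
 rewrite <- (unitary_entry n U HU i j Hi Hj). apply Csum_ext; intros; ceq. Qed.

Lemma spec_eigval : forall i, (i < n)%nat -> qf n A (col U i) = lam i.
Proof. intros. rewrite (qf_meq _ _ _ _ HA), spec_qf.
 rewrite (Rsum_ext n _ (fun l => if Nat.eqb i l then lam l else 0)).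
 apply Rsum_delta; auto.
 intros l Hl. rewrite spec_ortho; auto. unfold idm. rewrite Nat.eqb_sym.
 destruct (Nat.eqb_spec i l); subst; unfold cn2; cunf; ring. Qed.

Lemma spec_apply : forall j x, (j < n)%nat ->
  Csum n (fun m => Cmul (A j m) (x m)) =
  Csum n (fun l => Cmul (Cmul (U j l) (RtoC (lam l))) (inner n (col U l) x)).
Proof. intros. rewrite (Csum_ext n _ (fun m => Csum n (fun l =>
   Cmul (Cmul (U j l) (RtoC (lam l))) (Cmul (Cconj (U m l)) (x m))))).
 rewrite Csum_swap. apply Csum_ext; intros l Hl. unfold inner, col. rewrite Csum_scal_l; auto.
 intros m Hm. rewrite HA by auto. rewrite entry_UDU, <- Csum_scal_r. apply Csum_ext; intros; ceq. Qed.

Lemma spec_eigvec : forall j i, (j < n)%nat -> (i < n)%nat ->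
  Csum n (fun m => Cmul (A j m) (U m i)) = Cmul (RtoC (lam i)) (U j i).
Proof. intros. pose proof (spec_apply j (col U i) H) as E. unfold col in E at 1. rewrite E.
 rewrite (Csum_ext n _ (fun l => if Nat.eqb l i then Cmul (RtoC (lam l)) (U j l) else C0)).
 apply Csum_delta'; auto.
 intros l Hl. rewrite spec_ortho; auto. unfold idm. destruct (Nat.eqb l i); ceq. Qed.

Lemma spec_recon : forall j x, (j < n)%nat ->
  Csum n (fun l => Cmul (U j l) (inner n (col U l) x)) = x j.
Proof. intros. rewrite (Csum_ext n _ (fun l => Csum n (fun m => Cmul (Cmul (U j l) (Cconj (U m l))) (x m)))).
 rewrite Csum_swap.
 rewrite (Csum_ext n _ (fun m => if Nat.eqb j m then x m else C0)). apply Csum_delta; auto.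
 intros m Hm. rewrite Csum_scal_r, unitary_entry; auto. unfold idm; destruct (Nat.eqb j m); ceq.
 intros l Hl. unfold inner, col. rewrite <- Csum_scal_l. apply Csum_ext; intros; ceq. Qed.

End Spec.
Lemma dm : forall a q m, (q < m)%nat -> ((a * m + q) / m = a /\ (a * m + q) mod m = q)%nat.
Proof. intros. split. symmetry; apply (Nat.div_unique _ _ _ q); lia.
 symmetry; apply (Nat.mod_unique _ _ a q); lia. Qed.

Lemma decomp : forall i m, m <> 0%nat -> exists a q, (q < m)%nat /\ i = (a * m + q)%nat.
Proof. intros. exists (i / m)%nat, (i mod m)%nat. split. apply Nat.mod_upper_bound; auto.
 pose proof (Nat.div_mod_eq i m). lia. Qed.

Definition jm (i : nat) : nat := (i / 2 * 4 + 1 + i mod 2)%nat.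
Definition sgn (sg : R) (i : nat) : R := if Nat.eqb (i mod 2) 0 then 1 else sg.
Definition Jv (sg : R) (w : Vec) : Vec := fun m =>
  if Nat.eqb (m mod 4) 1 then w (m / 4 * 2)%nat
  else if Nat.eqb (m mod 4) 2 then Cmul (RtoC sg) (w (m / 4 * 2 + 1)%nat) else C0.

Lemma jm_0 : forall a, jm (a * 2 + 0) = (a * 4 + 1)%nat.
Proof. intros. unfold jm. destruct (dm a 0 2) as [-> ->]; lia. Qed.
Lemma jm_1 : forall a, jm (a * 2 + 1) = (a * 4 + 2)%nat.
Proof. intros. unfold jm. destruct (dm a 1 2) as [-> ->]; lia. Qed.

Lemma Csum4 : forall n f, Csum (n * 2 * 2) f =
  Csum n (fun a => Cadd (Cadd (Cadd (f (a * 4 + 0)%nat) (f (a * 4 + 1)%nat)) (f (a * 4 + 2)%nat)) (f (a * 4 + 3)%nat)).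
Proof. intros. replace (n * 2 * 2)%nat with (n * 4)%nat by lia. rewrite Csum_mul.
 apply Csum_ext; intros. simpl. ceq. Qed.
Lemma Csum2 : forall n f, Csum (n * 2) f = Csum n (fun a => Cadd (f (a * 2 + 0)%nat) (f (a * 2 + 1)%nat)).
Proof. intros. rewrite Csum_mul. apply Csum_ext; intros. simpl. ceq. Qed.

Lemma CsumJ : forall n f, (forall a, (a < n)%nat -> f (a * 4 + 0)%nat = C0 /\ f (a * 4 + 3)%nat = C0) ->
  Csum (n * 2 * 2) f = Csum (n * 2) (fun i => f (jm i)).
Proof. intros. rewrite Csum4, Csum2. apply Csum_ext; intros a Ha. rewrite jm_0, jm_1.
 destruct (H a Ha) as [-> ->]. ceq. Qed.

Lemma Rsum_Csum : forall n f, Rsum n f = fst (Csum n (fun i => RtoC (f i))).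
Proof. intros. rewrite fst_Csum. auto. Qed.

Lemma RsumJ : forall n f, (forall a, (a < n)%nat -> f (a * 4 + 0)%nat = 0 /\ f (a * 4 + 3)%nat = 0) ->
  Rsum (n * 2 * 2) f = Rsum (n * 2) (fun i => f (jm i)).
Proof. intros. rewrite !Rsum_Csum. rewrite CsumJ; auto. intros a Ha. destruct (H a Ha) as [-> ->]. split; auto. Qed.

Lemma Jv_0 : forall sg w a, Jv sg w (a * 4 + 0)%nat = C0.
Proof. intros. unfold Jv. destruct (dm a 0 4) as [_ ->]; [lia|]. auto. Qed.
Lemma Jv_3 : forall sg w a, Jv sg w (a * 4 + 3)%nat = C0.
Proof. intros. unfold Jv. destruct (dm a 3 4) as [_ ->]; [lia|]. auto. Qed.

Lemma Jv_jm : forall sg w i, Jv sg w (jm i) = Cmul (RtoC (sgn sg i)) (w i).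
Proof. intros. destruct (decomp i 2) as [a [x [Hx ->]]]; [lia|].
 destruct x as [|[|]]; try lia.
 - rewrite jm_0. unfold Jv, sgn. destruct (dm a 1 4) as [-> ->]; [lia|].
   destruct (dm a 0 2) as [_ ->]; [lia|]. simpl. rewrite Nat.add_0_r. ceq.
 - rewrite jm_1. unfold Jv, sgn. destruct (dm a 2 4) as [-> ->]; [lia|].
   destruct (dm a 1 2) as [_ ->]; [lia|]. simpl. auto.
Qed.
Lemma ln2_pos : 0 < ln 2.
Proof. pose proof ln_lt_2. lra. Qed.

Lemma ln_le_m1 : forall t, 0 < t -> ln t <= t - 1.
Proof. intros. pose proof (exp_ineq1_le (ln t)). rewrite exp_ln in H0; lra. Qed.
Lemma ln_lt_m1 : forall t, 0 < t -> t <> 1 -> ln t < t - 1.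
Proof. intros. assert (ln t <> 0). { intro. apply H0. rewrite <- (exp_ln t H), H1. apply exp_0. }
 pose proof (exp_ineq1 (ln t) H1). rewrite exp_ln in H2; lra. Qed.

Lemma plogp_0 : plogp 0 = 0.
Proof. unfold plogp. destruct (Req_EM_T 0 0); auto. lra. Qed.
Lemma plogp_pos : forall x, x <> 0 -> plogp x = x * (ln x / ln 2).
Proof. intros. unfold plogp. destruct (Req_EM_T x 0); [lra|auto]. Qed.

Definition tres (g x : R) := plogp x - plogp g - (ln g + 1) / ln 2 * (x - g).

Lemma tres_nonneg : forall g x, 0 < g -> 0 <= x -> 0 <= tres g x /\ (tres g x = 0 -> x = g).
Proof. intros. pose proof ln2_pos. unfold tres. rewrite (plogp_pos g) by lra.
 destruct (Req_dec x 0).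
 - subst. rewrite plogp_0. split. 2:{ intro. exfalso.
     assert (0 - g * (ln g / ln 2) - (ln g + 1) / ln 2 * (0 - g) = g / ln 2) by (field; lra).
     assert (0 < g / ln 2) by (apply Rdiv_lt_0_compat; lra). lra. }
   assert (0 - g * (ln g / ln 2) - (ln g + 1) / ln 2 * (0 - g) = g / ln 2) by (field; lra).
   rewrite H2. apply Rlt_le, Rdiv_lt_0_compat; lra.
 - rewrite plogp_pos by auto.
   assert (Hx : 0 < x) by lra.
   assert (E : x * (ln x / ln 2) - g * (ln g / ln 2) - (ln g + 1) / ln 2 * (x - g)
             = (g - x - x * ln (g / x)) / ln 2).
   { replace (ln (g / x)) with (ln g - ln x). field; lra. unfold Rdiv. rewrite ln_mult, ln_Rinv; try apply Rinv_0_lt_compat; lra. }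
   rewrite E. assert (Ht : 0 < g / x) by (apply Rdiv_lt_0_compat; lra).
   pose proof (ln_le_m1 _ Ht).
   assert (x * ln (g / x) <= x * (g / x - 1)) by (apply Rmult_le_compat_l; lra).
   replace (x * (g / x - 1)) with (g - x) in H4 by (field; lra).
   split. apply Rmult_le_pos; [lra| apply Rlt_le, Rinv_0_lt_compat; lra].
   intro. destruct (Req_dec (g / x) 1).
   + apply (f_equal (Rmult x)) in H6. replace (x * (g / x)) with g in H6 by (field; lra). lra.
   + exfalso. pose proof (ln_lt_m1 _ Ht H6).
     assert (x * ln (g / x) < x * (g / x - 1)) by (apply Rmult_lt_compat_l; lra).
     replace (x * (g / x - 1)) with (g - x) in H8 by (field; lra).
     assert (0 < (g - x - x * ln (g / x)) / ln 2) by (apply Rdiv_lt_0_compat; lra). lra.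
Qed.

Lemma Rsum_zero_f : forall n f, (forall i, (i < n)%nat -> f i = 0) -> Rsum n f = 0.
Proof. intros. rewrite (Rsum_ext n f (fun _ => 0)) by auto. rewrite Rsum_const. ring. Qed.

Lemma jensen : forall m (P r : nat -> R),
  (forall i, (i < m)%nat -> 0 <= P i) -> (forall i, (i < m)%nat -> 0 <= r i) ->
  Rsum m P = 1 ->
  plogp (Rsum m (fun i => P i * r i)) <= Rsum m (fun i => P i * plogp (r i)) /\
  (plogp (Rsum m (fun i => P i * r i)) = Rsum m (fun i => P i * plogp (r i)) ->
   forall i, (i < m)%nat -> P i <> 0 -> r i = Rsum m (fun i => P i * r i)).
Proof. intros m P r HP Hr H1. set (g := Rsum m (fun i => P i * r i)).
 assert (Hg : 0 <= g) by (apply Rsum_nonneg; intros; apply Rmult_le_pos; auto).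
 destruct (Req_dec g 0) as [Hg0|Hg0].
 - assert (Hz : forall i, (i < m)%nat -> P i * r i = 0).
   { apply Rsum_zero_each; auto. intros; apply Rmult_le_pos; auto. }
   assert (Hz2 : Rsum m (fun i => P i * plogp (r i)) = 0).
   { apply Rsum_zero_f. intros i Hi. specialize (Hz i Hi). apply Rmult_integral in Hz.
     destruct Hz as [-> | ->]. ring. rewrite plogp_0; ring. }
   rewrite Hz2, Hg0, plogp_0. split. lra. intros _ i Hi HPi. specialize (Hz i Hi).
   apply Rmult_integral in Hz. destruct Hz; [contradiction|lra].
 - assert (Hgp : 0 < g) by lra.
   assert (E : Rsum m (fun i => P i * plogp (r i)) - plogp g = Rsum m (fun i => P i * tres g (r i))).
   { rewrite (Rsum_ext m (fun i => P i * tres g (r i)) (fun i => P i * plogp (r i) + (- plogp g) * P i + (- ((ln g + 1) / ln 2)) * (P i * r i) + ((ln g + 1) / ln 2 * g) * P i)) by (intros; unfold tres; ring).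
     rewrite !Rsum_add, !Rsum_scal, H1. fold g. ring. }
   assert (Hn : forall i, (i < m)%nat -> 0 <= P i * tres g (r i)).
   { intros. apply Rmult_le_pos; auto. apply tres_nonneg; auto. }
   split. assert (0 <= Rsum m (fun i => P i * tres g (r i))) by (apply Rsum_nonneg; auto). lra.
   intros Heq i Hi HPi.
   assert (Rsum m (fun i => P i * tres g (r i)) = 0) by lra.
   pose proof (Rsum_zero_each m _ Hn H i Hi). simpl in H0.
   apply Rmult_integral in H0. destruct H0; [contradiction|].
   apply (tres_nonneg g (r i) Hgp (Hr i Hi)); auto.
Qed.

Lemma midpoint : forall a b, 0 <= a -> 0 <= b ->
  plogp ((a + b) / 2) <= (plogp a + plogp b) / 2 /\
  (plogp ((a + b) / 2) = (plogp a + plogp b) / 2 -> a = b).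
Proof. intros. set (P := fun i : nat => / 2). set (r := fun i : nat => match i with O => a | _ => b end).
 pose proof (jensen 2 P r) as J. simpl in J. unfold P, r in J.
 assert (E1 : 0 + / 2 * a + / 2 * b = (a + b) / 2) by field.
 assert (E2 : 0 + / 2 * plogp a + / 2 * plogp b = (plogp a + plogp b) / 2) by field.
 rewrite E1, E2 in J. destruct J as [J1 J2].
 - intros; lra.
 - intros i Hi; destruct i; lra.
 - field.
 - split; auto. intro He. pose proof (J2 He 0%nat ltac:(lia) ltac:(lra)).
   pose proof (J2 He 1%nat ltac:(lia) ltac:(lra)). simpl in *. lra.
Qed.
Lemma chain : forall N4 N2 (r mu : nat -> R) (P P' : nat -> nat -> R),
  (forall i, (i < N4)%nat -> 0 <= r i) ->
  (forall i k, 0 <= P i k) -> (forall i k, 0 <= P' i k) ->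
  (forall k, (k < N2)%nat -> Rsum N4 (fun i => P i k) = 1 /\ Rsum N4 (fun i => P' i k) = 1) ->
  (forall i, (i < N4)%nat -> plogp (r i) <> 0 ->
      Rsum N2 (fun k => P i k) = 1 /\ Rsum N2 (fun k => P' i k) = 1) ->
  (forall k, (k < N2)%nat ->
      Rsum N4 (fun i => P i k * r i) + Rsum N4 (fun i => P' i k * r i) = 2 * mu k) ->
  Rsum N2 (fun k => plogp (mu k)) <= Rsum N4 (fun i => plogp (r i)) /\
  (Rsum N2 (fun k => plogp (mu k)) = Rsum N4 (fun i => plogp (r i)) ->
   forall k, (k < N2)%nat -> Rsum N4 (fun i => P i k * r i) = mu k /\
     forall i, (i < N4)%nat -> P i k <> 0 -> r i = mu k).
Proof. intros N4 N2 r mu P P' Hr HP HP' Hcol Hrow Hsum.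
 set (g := fun k => Rsum N4 (fun i => P i k * r i)).
 set (g' := fun k => Rsum N4 (fun i => P' i k * r i)).
 assert (Hg : forall k, (k < N2)%nat -> 0 <= g k).
 { intros; apply Rsum_nonneg; intros; apply Rmult_le_pos; auto. }
 assert (Hg' : forall k, (k < N2)%nat -> 0 <= g' k).
 { intros; apply Rsum_nonneg; intros; apply Rmult_le_pos; auto. }
 assert (Jg : forall k, (k < N2)%nat -> plogp (g k) <= Rsum N4 (fun i => P i k * plogp (r i))).
 { intros. apply jensen; auto. apply Hcol; auto. }
 assert (Jg' : forall k, (k < N2)%nat -> plogp (g' k) <= Rsum N4 (fun i => P' i k * plogp (r i))).
 { intros. apply jensen; auto. apply Hcol; auto. }
 assert (Tot : Rsum N2 (fun k => Rsum N4 (fun i => P i k * plogp (r i))) = Rsum N4 (fun i => plogp (r i))).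
 { rewrite Rsum_swap. apply Rsum_ext; intros i Hi.
   rewrite (Rsum_ext N2 _ (fun k => plogp (r i) * P i k)) by (intros; ring).
   rewrite Rsum_scal. destruct (Req_dec (plogp (r i)) 0). rewrite H; ring.
   replace (Rsum N2 (P i)) with 1 by (symmetry; exact (proj1 (Hrow i Hi H))); ring. }
 assert (Tot' : Rsum N2 (fun k => Rsum N4 (fun i => P' i k * plogp (r i))) = Rsum N4 (fun i => plogp (r i))).
 { rewrite Rsum_swap. apply Rsum_ext; intros i Hi.
   rewrite (Rsum_ext N2 _ (fun k => plogp (r i) * P' i k)) by (intros; ring).
   rewrite Rsum_scal. destruct (Req_dec (plogp (r i)) 0). rewrite H; ring.
   replace (Rsum N2 (P' i)) with 1 by (symmetry; exact (proj2 (Hrow i Hi H))); ring. }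
 assert (Mid : forall k, (k < N2)%nat -> plogp (mu k) <= (plogp (g k) + plogp (g' k)) / 2).
 { intros. replace (mu k) with ((g k + g' k) / 2) by (unfold g, g'; rewrite Hsum; auto; field).
   apply midpoint; auto. }
 assert (S1 : Rsum N2 (fun k => plogp (g k)) <= Rsum N4 (fun i => plogp (r i))).
 { rewrite <- Tot. apply Rsum_le; auto. }
 assert (S2 : Rsum N2 (fun k => plogp (g' k)) <= Rsum N4 (fun i => plogp (r i))).
 { rewrite <- Tot'. apply Rsum_le; auto. }
 assert (S3 : Rsum N2 (fun k => plogp (mu k)) <= Rsum N2 (fun k => (plogp (g k) + plogp (g' k)) / 2)).
 { apply Rsum_le; auto. }
 assert (S4 : Rsum N2 (fun k => (plogp (g k) + plogp (g' k)) / 2) =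
    (Rsum N2 (fun k => plogp (g k)) + Rsum N2 (fun k => plogp (g' k))) / 2).
 { rewrite (Rsum_ext N2 _ (fun k => /2 * plogp (g k) + /2 * plogp (g' k))) by (intros; field).
   rewrite Rsum_add, !Rsum_scal. field. }
 split. lra.
 intros Heq k Hk.
 assert (E1 : Rsum N2 (fun k => plogp (g k)) = Rsum N4 (fun i => plogp (r i))) by lra.
 assert (E3 : Rsum N2 (fun k => plogp (mu k)) = Rsum N2 (fun k => (plogp (g k) + plogp (g' k)) / 2)) by lra.
 pose proof (Rsum_le_eq N2 _ _ Mid E3 k Hk) as M. simpl in M.
 assert (Hgg : g k = g' k).
 { replace (mu k) with ((g k + g' k) / 2) in M by (unfold g, g'; rewrite Hsum; auto; field).
   apply (midpoint (g k) (g' k)); auto. }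
 assert (Hmu : g k = mu k). { assert (Hs := Hsum k Hk). change (g k + g' k = 2 * mu k) in Hs. lra. }
 split. exact Hmu.
 rewrite <- Tot in E1.
 pose proof (Rsum_le_eq N2 _ _ Jg E1 k Hk) as J. simpl in J.
 intros i Hi HPi. rewrite <- Hmu.
 eapply (proj2 (jensen N4 (fun i => P i k) r (fun i _ => HP i k) Hr (proj1 (Hcol k Hk)))); eauto.
Qed.
Section Rho.
Variables (p1 p2 : R) (r1 r2 : Mat).
Let rho := rhoABC p1 p2 r1 r2.

Lemma rho_at : forall a q a' q', (q < 4)%nat -> (q' < 4)%nat ->
  rho (a * 4 + q)%nat (a' * 4 + q')%nat =
  Cadd (Cmul (RtoC p1) (Cmul (r1 a a') (proj psi_plus q q')))
       (Cmul (RtoC p2) (Cmul (r2 a a') (proj psi_minus q q'))).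
Proof. intros. unfold rho, rhoABC, madd, mscale, kron.
 destruct (dm a q 4 H) as [-> ->]. destruct (dm a' q' 4 H0) as [-> ->]. auto. Qed.

Lemma rho_zero : forall m m', (m mod 4 = 0 \/ m mod 4 = 3 \/ m' mod 4 = 0 \/ m' mod 4 = 3)%nat ->
  rho m m' = C0.
Proof. intros. unfold rho, rhoABC, madd, mscale, kron, proj, psi_plus, psi_minus.
 destruct H as [H|[H|[H|H]]]; rewrite H; cbn [psi_vec]; ceq. Qed.

Lemma rho_jm : forall i j, rho (jm i) (jm j) =
  Cmul (RtoC (/ sqrt 2 * / sqrt 2)) (Cadd (Cmul (RtoC p1) (r1 (i / 2)%nat (j / 2)%nat))
     (Cmul (RtoC (p2 * (sgn (-1) i * sgn (-1) j))) (r2 (i / 2)%nat (j / 2)%nat))).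
Proof. intros. destruct (decomp i 2) as [a [x [Hx ->]]]; [lia|].
 destruct (decomp j 2) as [a' [x' [Hx' ->]]]; [lia|].
 unfold sgn. destruct (dm a x 2 Hx) as [-> ->]. destruct (dm a' x' 2 Hx') as [-> ->].
 destruct x as [|[|]]; try lia; destruct x' as [|[|]]; try lia;
 rewrite ?jm_0, ?jm_1, rho_at by lia; unfold proj, psi_plus, psi_minus; cbn [psi_vec Nat.eqb];
 ceq. Qed.

Lemma rhoAB_entry : forall i j, ptrace 2 rho i j =
  if Nat.eqb (i mod 2) (j mod 2) then rho (jm i) (jm j) else C0.
Proof. intros. destruct (decomp i 2) as [a [x [Hx ->]]]; [lia|].
 destruct (decomp j 2) as [a' [x' [Hx' ->]]]; [lia|].
 destruct (dm a x 2 Hx) as [_ ->]. destruct (dm a' x' 2 Hx') as [_ ->].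
 unfold ptrace. cbn [Csum].
 destruct x as [|[|]]; try lia; destruct x' as [|[|]]; try lia; cbn [Nat.eqb];
 rewrite ?jm_0, ?jm_1;
 repeat match goal with |- context [ (( ?a * 2 + ?x) * 2 + ?k)%nat ] =>
   let q := eval compute in (2 * x + k)%nat in
   replace ((a * 2 + x) * 2 + k)%nat with (a * 4 + q)%nat by lia end;
 rewrite ?(rho_zero (_ * 4 + 0)%nat), ?(rho_zero (_ * 4 + 3)%nat), ?(rho_zero _ (_ * 4 + 0)%nat), ?(rho_zero _ (_ * 4 + 3)%nat);
 try ceq;
 try (destruct (dm a' 0 4) as [_ ->]; lia); try (destruct (dm a' 3 4) as [_ ->]; lia);
 try (destruct (dm a 0 4) as [_ ->]; lia); try (destruct (dm a 3 4) as [_ ->]; lia).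
Qed.
End Rho.
Lemma Csum_eq_scal_r : forall n c f g, (forall i, (i < n)%nat -> f i = Cmul (g i) c) ->
  Csum n f = Cmul (Csum n g) c.
Proof. intros. rewrite <- Csum_scal_r. apply Csum_ext; auto. Qed.

Lemma qf_qf2 : forall n A x, qf n A x =
  Rsum n (fun i => Rsum n (fun j => fst (Cmul (Cmul (Cconj (x i)) (A i j)) (x j)))).
Proof. intros. unfold qf. rewrite fst_Csum. apply Rsum_ext; intros.
 rewrite <- Csum_scal_l, fst_Csum. apply Rsum_ext; intros. cunf; ring. Qed.

Lemma qf_madd : forall n A B x, qf n (madd A B) x = qf n A x + qf n B x.
Proof. intros. rewrite !qf_qf2, <- Rsum_add. apply Rsum_ext; intros.
 rewrite <- Rsum_add. apply Rsum_ext; intros. unfold madd; cunf; ring. Qed.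

Lemma qf_mscale : forall n p A x, qf n (mscale p A) x = p * qf n A x.
Proof. intros. rewrite !qf_qf2, <- Rsum_scal. apply Rsum_ext; intros.
 rewrite <- Rsum_scal. apply Rsum_ext; intros. unfold mscale; cunf; ring. Qed.

Definition zvec (m : nat) (phi x : Vec) : Vec :=
  fun a => Csum m (fun q => Cmul (Cconj (phi q)) (x (a * m + q)%nat)).

Lemma qf_kron_proj : forall n m A phi x,
  qf (n * m) (kron m A (proj phi)) x = qf n A (zvec m phi x).
Proof. intros. unfold qf. f_equal. rewrite Csum_mul. apply Csum_ext; intros a Ha.
 set (Y := Csum n (fun a' => Cmul (A a a') (zvec m phi x a'))).
 rewrite (Csum_ext m _ (fun q => Cmul (Cmul (Cconj (x (a * m + q)%nat)) (phi q)) Y)).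
 - rewrite Csum_scal_r. f_equal. unfold zvec. rewrite Cconj_Csum. apply Csum_ext; intros; ceq.
 - intros q Hq. rewrite Csum_mul.
   assert (Hin : Csum n (fun a' => Csum m (fun q' => Cmul (kron m A (proj phi) (a * m + q)%nat (a' * m + q')%nat) (x (a' * m + q')%nat))) = Cmul (phi q) Y).
   { unfold Y. rewrite <- Csum_scal_l. apply Csum_ext; intros a' Ha'. unfold zvec.
     rewrite <- !Csum_scal_l. apply Csum_ext; intros q' Hq'.
     unfold kron, proj. destruct (dm a q m Hq) as [-> ->]. destruct (dm a' q' m Hq') as [-> ->]. ceq. }
   rewrite Hin. ceq.
Qed.

Lemma qf_rho : forall n p1 p2 r1 r2 x,
  qf (n * 2 * 2) (rhoABC p1 p2 r1 r2) x =
  p1 * qf n r1 (zvec 4 psi_plus x) + p2 * qf n r2 (zvec 4 psi_minus x).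
Proof. intros. replace (n * 2 * 2)%nat with (n * 4)%nat by lia. unfold rhoABC.
 rewrite qf_madd, !qf_mscale, !qf_kron_proj. auto. Qed.

Lemma psd_rho : forall n p1 p2 r1 r2, 0 <= p1 -> 0 <= p2 -> psd n r1 -> psd n r2 ->
  forall x, 0 <= qf (n * 2 * 2) (rhoABC p1 p2 r1 r2) x.
Proof. intros. rewrite qf_rho. pose proof (H1 (zvec 4 psi_plus x)). pose proof (H2 (zvec 4 psi_minus x)).
 unfold qf. apply Rplus_le_le_0_compat; apply Rmult_le_pos; auto. Qed.
Lemma sgn1 : forall i, sgn 1 i = 1.
Proof. intros; unfold sgn; destruct (Nat.eqb _ _); auto. Qed.
Lemma sgn_sq : forall sg i, sg * sg = 1 -> sgn sg i * sgn sg i = 1.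
Proof. intros; unfold sgn; destruct (Nat.eqb _ _); lra. Qed.

Lemma inner_J : forall n sg u w,
  inner (n * 2 * 2) u (Jv sg w) = inner (n * 2) (fun i => Cmul (RtoC (sgn sg i)) (u (jm i))) w.
Proof. intros. unfold inner. rewrite CsumJ. apply Csum_ext; intros. rewrite Jv_jm. ceq.
 intros. rewrite Jv_0, Jv_3. split; ceq. Qed.

Lemma norm_J : forall n sg w, sg * sg = 1 ->
  Rsum (n * 2 * 2) (fun m => cn2 (Jv sg w m)) = Rsum (n * 2) (fun i => cn2 (w i)).
Proof. intros. rewrite RsumJ. apply Rsum_ext; intros. rewrite Jv_jm.
 pose proof (sgn_sq sg i H). unfold cn2 in *; cunf. nra.
 intros. rewrite Jv_0, Jv_3. unfold cn2; cunf; split; ring. Qed.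

Lemma norm_Jadj : forall n sg u, sg * sg = 1 ->
  (forall a, (a < n)%nat -> u (a * 4 + 0)%nat = C0 /\ u (a * 4 + 3)%nat = C0) ->
  Rsum (n * 2) (fun i => cn2 (Cmul (RtoC (sgn sg i)) (u (jm i)))) = Rsum (n * 2 * 2) (fun m => cn2 (u m)).
Proof. intros. rewrite RsumJ. apply Rsum_ext; intros.
 pose proof (sgn_sq sg i H). unfold cn2 in *; cunf. nra.
 intros. destruct (H0 a H1) as [-> ->]. unfold cn2; cunf; split; ring. Qed.

Section Rho2.
Variables (p1 p2 : R) (r1 r2 : Mat).
Let rho := rhoABC p1 p2 r1 r2.
Definition Zm : Mat := fun i j => rho (jm i) (jm j).

Lemma qf_J : forall n sg w, qf (n * 2 * 2) rho (Jv sg w) = qf (n * 2) Zm (fun i => Cmul (RtoC (sgn sg i)) (w i)).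
Proof. intros. unfold qf. f_equal. rewrite CsumJ. apply Csum_ext; intros i Hi. rewrite Jv_jm. f_equal.
 rewrite CsumJ. apply Csum_ext; intros. rewrite Jv_jm. auto.
 intros. rewrite Jv_0, Jv_3. split; ceq.
 intros. rewrite Jv_0, Jv_3. split; ceq. Qed.

Lemma qf_pinch : forall N w,
  qf N Zm (fun i => Cmul (RtoC (sgn 1 i)) (w i)) + qf N Zm (fun i => Cmul (RtoC (sgn (-1) i)) (w i))
  = 2 * qf N (ptrace 2 rho) w.
Proof. intros. rewrite !qf_qf2, <- Rsum_add, <- Rsum_scal. apply Rsum_ext; intros i Hi.
 rewrite <- Rsum_add, <- Rsum_scal. apply Rsum_ext; intros j Hj.
 unfold rho. rewrite rhoAB_entry. unfold Zm, sgn. fold rho.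
 assert (i mod 2 < 2)%nat by (apply Nat.mod_upper_bound; lia).
 assert (j mod 2 < 2)%nat by (apply Nat.mod_upper_bound; lia).
 destruct (i mod 2) as [|[|k]]; try lia; destruct (j mod 2) as [|[|k']]; try lia; cbn [Nat.eqb];
 cunf; ring. Qed.

Lemma apply_J : forall n j w,
  Csum (n * 2 * 2) (fun m => Cmul (rho (jm j) m) (Jv 1 w m)) = Csum (n * 2) (fun i => Cmul (Zm j i) (w i)).
Proof. intros. rewrite CsumJ. apply Csum_ext; intros. rewrite Jv_jm, sgn1. unfold Zm. ceq.
 intros. rewrite Jv_0, Jv_3. split; ceq. Qed.

End Rho2.
Lemma fst_inner_self : forall n x, fst (inner n x x) = Rsum n (fun i => cn2 (x i)).
Proof. intros. unfold inner. rewrite fst_Csum. apply Rsum_ext; intros. unfold cn2; cunf; ring. Qed.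

Lemma cn2_inner_sym : forall n x y, cn2 (inner n x y) = cn2 (inner n y x).
Proof. intros. replace (inner n y x) with (Cconj (inner n x y)).
 unfold cn2; cunf; ring. unfold inner. rewrite Cconj_Csum. apply Csum_ext; intros; ceq. Qed.

Lemma Cmul_RtoC_zero : forall c z, c <> 0 -> Cmul (RtoC c) z = C0 -> z = C0.
Proof. intros c [a b] Hc H. unfold Cmul, RtoC, C0 in H. simpl in H. inversion H.
 unfold C0. f_equal.
 - apply (Rmult_eq_reg_l c); auto. nra.
 - apply (Rmult_eq_reg_l c); auto. nra. Qed.

Lemma s2 : / sqrt 2 * / sqrt 2 = / 2.
Proof. rewrite <- Rinv_mult, sqrt_sqrt; lra. Qed.

Lemma plogp_nz : forall x, plogp x <> 0 -> x <> 0.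
Proof. intros x H ->. apply H, plogp_0. Qed.

Lemma idm_diag : forall k, idm k k = Defs.C1.
Proof. intros; unfold idm; rewrite Nat.eqb_refl; auto. Qed.
Lemma jm_lt : forall n i, (i < n * 2)%nat -> (jm i < n * 2 * 2)%nat.
Proof. intros. destruct (decomp i 2) as [a [x [Hx ->]]]; [lia|].
 destruct x as [|[|]]; try lia; rewrite ?jm_0, ?jm_1; lia. Qed.

Lemma core : forall n rho1 rho2 p1 p2 sAB sABC,
  density n rho1 -> density n rho2 -> 0 <= p1 -> 0 <= p2 ->
  is_entropy (n * 2) (ptrace 2 (rhoABC p1 p2 rho1 rho2)) sAB ->
  is_entropy (n * 2 * 2) (rhoABC p1 p2 rho1 rho2) sABC ->
  sABC <= sAB /\
  (sAB = sABC -> forall a a', (a < n)%nat -> (a' < n)%nat ->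
     Cmul (RtoC p1) (rho1 a a') = Cmul (RtoC p2) (rho2 a a')).
Proof.
 intros n rho1 rho2 p1 p2 sAB sABC Hd1 Hd2 Hp1 Hp2 [V [mu [HV [HAB HsAB]]]] [U [r [HU [HABC HsABC]]]].
 destruct Hd1 as [Hh1 [Hpsd1 Htr1]]. destruct Hd2 as [Hh2 [Hpsd2 Htr2]].
 set (P := fun i k => cn2 (inner (n * 2 * 2) (col U i) (Jv 1 (col V k)))).
 set (P' := fun i k => cn2 (inner (n * 2 * 2) (col U i) (Jv (-1) (col V k)))).
 assert (Hr : forall i, (i < n * 2 * 2)%nat -> 0 <= r i).
 { intros. rewrite <- (spec_eigval _ U r _ HU HABC i H). apply psd_rho; auto. }
 assert (Hcol : forall k, (k < n * 2)%nat ->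
    Rsum (n * 2 * 2) (fun i => P i k) = 1 /\ Rsum (n * 2 * 2) (fun i => P' i k) = 1).
 { intros k Hk. unfold P, P'. rewrite !(spec_parseval _ U HU), !norm_J by lra.
   rewrite <- fst_inner_self, (spec_ortho _ V HV k k Hk Hk), idm_diag. split; reflexivity. }
 assert (Hvan : forall i, (i < n * 2 * 2)%nat -> r i <> 0 ->
    forall a, (a < n)%nat -> U (a * 4 + 0)%nat i = C0 /\ U (a * 4 + 3)%nat i = C0).
 { intros i Hi Hri a Ha. split; apply (Cmul_RtoC_zero (r i)); auto.
   - rewrite <- (spec_eigvec _ U r _ HU HABC (a * 4 + 0)%nat i) by lia. apply Csum_zero; intros m Hm.
     rewrite rho_zero. ceq. left. destruct (dm a 0 4) as [_ ->]; lia.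
   - rewrite <- (spec_eigvec _ U r _ HU HABC (a * 4 + 3)%nat i) by lia. apply Csum_zero; intros m Hm.
     rewrite rho_zero. ceq. right; left. destruct (dm a 3 4) as [_ ->]; lia. }
 assert (Hrow : forall i, (i < n * 2 * 2)%nat -> plogp (r i) <> 0 ->
    Rsum (n * 2) (fun k => P i k) = 1 /\ Rsum (n * 2) (fun k => P' i k) = 1).
 { intros i Hi Hpl. apply plogp_nz in Hpl. unfold P, P'.
   assert (Hn1 : Rsum (n * 2 * 2) (fun m => cn2 (U m i)) = 1).
   { change (fun m => cn2 (U m i)) with (fun m => cn2 (col U i m)).
     rewrite <- fst_inner_self, (spec_ortho _ U HU i i Hi Hi), idm_diag. reflexivity. }
   split.
   - rewrite (Rsum_ext _ _ (fun k => cn2 (inner (n * 2) (col V k)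
        (fun i0 => Cmul (RtoC (sgn 1 i0)) (col U i (jm i0)))))).
     rewrite (spec_parseval _ V HV), norm_Jadj; [exact Hn1 | lra | apply Hvan; auto].
     intros. rewrite inner_J, cn2_inner_sym. auto.
   - rewrite (Rsum_ext _ _ (fun k => cn2 (inner (n * 2) (col V k)
        (fun i0 => Cmul (RtoC (sgn (-1) i0)) (col U i (jm i0)))))).
     rewrite (spec_parseval _ V HV), norm_Jadj; [exact Hn1 | lra | apply Hvan; auto].
     intros. rewrite inner_J, cn2_inner_sym. auto. }
 assert (Hg : forall sg k, Rsum (n * 2 * 2) (fun i => cn2 (inner (n * 2 * 2) (col U i) (Jv sg (col V k))) * r i)
     = qf (n * 2 * 2) (rhoABC p1 p2 rho1 rho2) (Jv sg (col V k))).
 { intros. rewrite (qf_meq _ _ _ _ HABC), spec_qf. apply Rsum_ext; intros; ring. }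
 assert (Hsum : forall k, (k < n * 2)%nat ->
    Rsum (n * 2 * 2) (fun i => P i k * r i) + Rsum (n * 2 * 2) (fun i => P' i k * r i) = 2 * mu k).
 { intros k Hk. unfold P, P'. rewrite !Hg, !qf_J, qf_pinch.
   rewrite <- (spec_eigval _ V mu _ HV HAB k Hk). reflexivity. }
 assert (HP : forall i k, 0 <= P i k) by (intros; apply cn2_nonneg).
 assert (HP' : forall i k, 0 <= P' i k) by (intros; apply cn2_nonneg).
 destruct (chain _ _ r mu P P' Hr HP HP' Hcol Hrow Hsum) as [C1 C2].
 split. rewrite HsAB, HsABC. lra.
 intros Heq.
 assert (Heq' : Rsum (n * 2) (fun k => plogp (mu k)) = Rsum (n * 2 * 2) (fun i => plogp (r i))) by lra.
 specialize (C2 Heq').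
 assert (SA : forall k j, (k < n * 2)%nat -> (j < n * 2 * 2)%nat ->
    Csum (n * 2 * 2) (fun m => Cmul (rhoABC p1 p2 rho1 rho2 j m) (Jv 1 (col V k) m)) =
    Cmul (RtoC (mu k)) (Jv 1 (col V k) j)).
 { intros k j Hk Hj. rewrite (spec_apply _ U r _ HABC j _ Hj).
   rewrite (Csum_ext _ _ (fun l => Cmul (RtoC (mu k)) (Cmul (U j l) (inner (n * 2 * 2) (col U l) (Jv 1 (col V k)))))).
   rewrite Csum_scal_l, (spec_recon _ U HU j _ Hj). auto.
   intros l Hl. destruct (Req_dec (P l k) 0) as [H0|H0].
   - unfold P in H0. apply cn2_zero in H0. rewrite H0. ceq.
   - rewrite (proj2 (C2 k Hk) l Hl H0). ceq. }
 assert (SB : forall k j, (k < n * 2)%nat -> (j < n * 2)%nat ->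
    Csum (n * 2) (fun i => Cmul (Zm p1 p2 rho1 rho2 j i) (col V k i)) = Cmul (RtoC (mu k)) (V j k)).
 { intros k j Hk Hj. rewrite <- apply_J, SA by (auto; apply jm_lt; auto). rewrite Jv_jm, sgn1.
   unfold col. ceq. }
 assert (SD : forall i j, (i < n * 2)%nat -> (j < n * 2)%nat ->
    Zm p1 p2 rho1 rho2 i j = ptrace 2 (rhoABC p1 p2 rho1 rho2) i j).
 { intros i j Hi Hj.
   set (D := fun m => Cadd (Zm p1 p2 rho1 rho2 i m) (Cmul (RtoC (-1)) (ptrace 2 (rhoABC p1 p2 rho1 rho2) i m))).
   assert (HD : forall k, (k < n * 2)%nat -> Csum (n * 2) (fun m => Cmul (D m) (V m k)) = C0).
   { intros k Hk. unfold D.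
     rewrite (Csum_ext _ _ (fun m => Cadd (Cmul (Zm p1 p2 rho1 rho2 i m) (col V k m))
        (Cmul (RtoC (-1)) (Cmul (ptrace 2 (rhoABC p1 p2 rho1 rho2) i m) (V m k))))) by (intros; unfold col; ceq).
     rewrite Csum_add, Csum_scal_l, SB, (spec_eigvec _ V mu _ HV HAB) by auto. ceq. }
   assert (E : D j = Csum (n * 2) (fun k => Cmul (Csum (n * 2) (fun m => Cmul (D m) (V m k))) (Cconj (V j k)))).
   { rewrite (Csum_ext _ _ (fun k => Csum (n * 2) (fun m => Cmul (D m) (Cmul (V m k) (Cconj (V j k)))))).
     2:{ intros. rewrite <- Csum_scal_r. apply Csum_ext; intros; ceq. }
     rewrite Csum_swap. rewrite (Csum_ext _ _ (fun m => if Nat.eqb m j then D m else C0)).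
     rewrite Csum_delta'; auto.
     intros m Hm. rewrite Csum_scal_l, (unitary_entry _ V HV m j Hm Hj). unfold idm.
     destruct (Nat.eqb m j); ceq. }
   rewrite Csum_zero in E. unfold D in E. assert (Ef := f_equal fst E). assert (Es := f_equal snd E).
   apply Cext; cunf; lra.
   intros k Hk. rewrite HD; auto. ceq. }
 intros a a' Ha Ha'.
 pose proof (SD (a * 2 + 0)%nat (a' * 2 + 1)%nat ltac:(lia) ltac:(lia)) as E.
 unfold Zm in E. rewrite rhoAB_entry, rho_jm in E.
 destruct (dm a 0 2) as [Ea1 Ea2]; [lia|]. destruct (dm a' 1 2) as [Eb1 Eb2]; [lia|].
 rewrite Ea1, Ea2, Eb1, Eb2 in E. unfold sgn in E. rewrite Ea2, Eb2 in E. cbn [Nat.eqb] in E.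
 rewrite s2 in E. apply Cmul_RtoC_zero in E; [|apply Rinv_neq_0_compat; lra].
 assert (Ef := f_equal fst E). assert (Es := f_equal snd E). apply Cext; cunf; lra.
Qed.
Lemma qf_proj : forall n e v, qf n (proj e) v = cn2 (inner n e v).
Proof. intros. unfold qf.
 rewrite (Csum_ext n _ (fun i => Cmul (Cmul (Cconj (v i)) (e i)) (inner n e v))).
 rewrite Csum_scal_r. replace (Csum n (fun i => Cmul (Cconj (v i)) (e i))) with (Cconj (inner n e v)).
 unfold cn2; cunf; ring.
 unfold inner. rewrite Cconj_Csum. apply Csum_ext; intros; ceq.
 intros i Hi. unfold inner, proj. rewrite <- !Csum_scal_l. apply Csum_ext; intros; ceq. Qed.

Lemma density_kron_proj : forall n A e, density n A ->
  Csum 2 (fun x => Cmul (e x) (Cconj (e x))) = Defs.C1 ->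
  density (n * 2) (kron 2 A (proj e)).
Proof. intros n A e [HA [HP HT]] He. split; [|split].
 - intros i j Hi Hj. unfold adjoint, kron, proj.
   assert (i / 2 < n)%nat by (apply Nat.Div0.div_lt_upper_bound; lia).
   assert (j / 2 < n)%nat by (apply Nat.Div0.div_lt_upper_bound; lia).
   pose proof (HA (i / 2)%nat (j / 2)%nat H H0) as E. unfold adjoint in E. rewrite <- E. ceq.
 - intros v. change (0 <= qf (n * 2) (kron 2 A (proj e)) v). rewrite qf_kron_proj. apply HP.
 - unfold trace. rewrite Csum_mul.
   rewrite (Csum_ext n _ (fun a => Cmul (A a a) (Csum 2 (fun x => Cmul (e x) (Cconj (e x)))))).
   rewrite He, Csum_scal_r. unfold trace in HT. rewrite HT. ceq.
   intros a Ha. rewrite <- Csum_scal_l. apply Csum_ext; intros x Hx. unfold kron, proj.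
   destruct (dm a x 2 Hx) as [-> ->]. auto.
Qed.

Lemma density_proj : forall e, Csum 2 (fun x => Cmul (e x) (Cconj (e x))) = Defs.C1 -> density 2 (proj e).
Proof. intros e He. split; [|split].
 - intros i j _ _. unfold adjoint, proj. ceq.
 - intros v. change (0 <= qf 2 (proj e) v). rewrite qf_proj. apply cn2_nonneg.
 - unfold trace, proj. exact He. Qed.

Definition e0 : Vec := fun i => if Nat.eqb i 0 then Defs.C1 else C0.
Definition e1 : Vec := fun i => if Nat.eqb i 1 then Defs.C1 else C0.

Lemma e0_norm : Csum 2 (fun x => Cmul (e0 x) (Cconj (e0 x))) = Defs.C1.
Proof. unfold e0; simpl; ceq. Qed.
Lemma e1_norm : Csum 2 (fun x => Cmul (e1 x) (Cconj (e1 x))) = Defs.C1.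
Proof. unfold e1; simpl; ceq. Qed.

Ltac idxcase a x c k :=
  replace (a * 4 + k)%nat with ((a * 2 + x) * 2 + c)%nat by lia;
  let E1 := fresh in let E2 := fresh in let F1 := fresh in let F2 := fresh in
  destruct (dm (a * 2 + x) c 2) as [E1 E2]; [lia|]; rewrite E1, E2;
  destruct (dm a x 2) as [F1 F2]; [lia|]; rewrite F1, F2; auto.

Lemma idx4 : forall a q, (q < 4)%nat ->
  (((a * 4 + q) / 2) / 2 = a /\ ((a * 4 + q) / 2) mod 2 = q / 2 /\ (a * 4 + q) mod 2 = q mod 2)%nat.
Proof. intros. destruct q as [|[|[|[|]]]]; try lia.
 idxcase a 0%nat 0%nat 0%nat. idxcase a 0%nat 1%nat 1%nat. idxcase a 1%nat 0%nat 2%nat. idxcase a 1%nat 1%nat 3%nat. Qed.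

Lemma kk : forall A B D a q a' q', (q < 4)%nat -> (q' < 4)%nat ->
  kron 2 (kron 2 A B) D (a * 4 + q)%nat (a' * 4 + q')%nat =
  Cmul (Cmul (A a a') (B (q / 2)%nat (q' / 2)%nat)) (D (q mod 2)%nat (q' mod 2)%nat).
Proof. intros. unfold kron. destruct (idx4 a q H) as [E1 [E2 E3]]. destruct (idx4 a' q' H0) as [F1 [F2 F3]].
 rewrite E1, E2, E3, F1, F2, F3. auto. Qed.

Lemma pp11 : forall sg, proj (psi_vec sg) 1%nat 1%nat = RtoC (/ 2).
Proof. intros. unfold proj. cbn. apply Cext; cunf; try rewrite <- s2; ring. Qed.
Lemma pp12 : forall sg, proj (psi_vec sg) 1%nat 2%nat = RtoC (sg / 2).
Proof. intros. unfold proj. cbn. apply Cext; cunf; unfold Rdiv; try rewrite <- s2; ring. Qed.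
Lemma pp21 : forall sg, proj (psi_vec sg) 2%nat 1%nat = RtoC (sg / 2).
Proof. intros. unfold proj. cbn. apply Cext; cunf; unfold Rdiv; try rewrite <- s2; ring. Qed.
Lemma pp22 : forall sg, sg * sg = 1 -> proj (psi_vec sg) 2%nat 2%nat = RtoC (/ 2).
Proof. intros. unfold proj. cbn. apply Cext; cunf; unfold Rdiv; try rewrite <- s2.
 transitivity (sg * sg * (/ sqrt 2 * / sqrt 2)). ring. rewrite H; ring. ring. Qed.

Lemma sep_final : forall n rho1, (forall a a', (a < n)%nat -> (a' < n)%nat -> True) -> density n rho1 ->
  separable (n * 2) 2 (rhoABC (/ 2) (/ 2) rho1 rho1).
Proof. intros n rho1 _ Hd.
 exists 2%nat, (fun _ => / 2),
   (fun k => if Nat.eqb k 0 then kron 2 rho1 (proj e0) else kron 2 rho1 (proj e1)),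
   (fun k => if Nat.eqb k 0 then proj e1 else proj e0).
 split; [|split].
 - intros k Hk. destruct k as [|[|]]; try lia; cbn [Nat.eqb]; (split; [lra|split]);
   try apply density_kron_proj; try apply density_proj; auto using e0_norm, e1_norm.
 - simpl. lra.
 - intros i j Hi Hj.
   destruct (decomp i 4) as [a [q [Hq ->]]]; [lia|].
   destruct (decomp j 4) as [a' [q' [Hq' ->]]]; [lia|].
   rewrite rho_at by auto. unfold msum, mscale. cbn [Csum]. cbn [Nat.eqb].
   rewrite !kk by auto. unfold psi_plus, psi_minus.
   destruct q as [|[|[|[|]]]]; try lia; destruct q' as [|[|[|[|]]]]; try lia;
   cbn [Nat.div Nat.modulo Nat.divmod Nat.sub fst snd];
   rewrite ?pp11, ?pp12, ?pp21, ?pp22 by lra;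
   unfold proj, e0, e1; cbn [psi_vec Nat.eqb]; apply Cext; cunf; field; apply Rgt_not_eq, sqrt_lt_R0; lra.
Qed.
Lemma sep_meq : forall N M A B, separable N M A -> meq (N * M) A B -> separable N M B.
Proof. intros N M A B [K [q [s [t [H1 [H2 H3]]]]]] HAB. exists K, q, s, t. split; auto. split; auto.
 intros i j Hi Hj. rewrite <- HAB by auto. apply H3; auto. Qed.

Lemma rho_meq2 : forall n p1 p2 r1 r2 r2', meq n r2 r2' ->
  meq (n * 2 * 2) (rhoABC p1 p2 r1 r2) (rhoABC p1 p2 r1 r2').
Proof. intros. intros i j Hi Hj. unfold rhoABC, madd, mscale, kron.
 rewrite H. auto. apply Nat.Div0.div_lt_upper_bound; lia. apply Nat.Div0.div_lt_upper_bound; lia. Qed.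

Theorem mainTheorem5 (d b : nat) (rho1 rho2 : Mat) (p1 p2 : R)
  (Distillable : Mat -> Prop) :
  density (d * b) rho1 -> density (d * b) rho2 ->
  0 <= p1 -> 0 <= p2 -> p1 + p2 = 1 ->
  forall sAB sABC : R,
    is_entropy (d * b * 2) (ptrace 2 (rhoABC p1 p2 rho1 rho2)) sAB ->
    is_entropy (d * b * 2 * 2) (rhoABC p1 p2 rho1 rho2) sABC ->
    (sABC < sAB -> Distillable (rhoABC p1 p2 rho1 rho2)) ->
    sABC <= sAB /\
    (sAB = sABC ->
       meq (d * b) rho1 rho2 /\ p1 = / 2 /\ p2 = / 2 /\
       separable (d * b * 2) 2 (rhoABC p1 p2 rho1 rho2)) /\
    ~ (~ separable (d * b * 2) 2 (rhoABC p1 p2 rho1 rho2) /\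
       ~ Distillable (rhoABC p1 p2 rho1 rho2)).
Proof.
 intros Hd1 Hd2 Hp1 Hp2 Hp sAB sABC HAB HABC Hdist.
 destruct (core (d * b) rho1 rho2 p1 p2 sAB sABC Hd1 Hd2 Hp1 Hp2 HAB HABC) as [Hle Heq].
 assert (Eq : sAB = sABC -> meq (d * b) rho1 rho2 /\ p1 = / 2 /\ p2 = / 2 /\
       separable (d * b * 2) 2 (rhoABC p1 p2 rho1 rho2)).
 { intros E. specialize (Heq E).
   assert (Hpp : p1 = p2).
   { assert (T : Csum (d * b) (fun a => Cmul (RtoC p1) (rho1 a a)) = Csum (d * b) (fun a => Cmul (RtoC p2) (rho2 a a))).
     { apply Csum_ext; intros; apply Heq; auto. }
     rewrite !Csum_scal_l in T. destruct Hd1 as [_ [_ T1]]. destruct Hd2 as [_ [_ T2]].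
     unfold trace in T1, T2. rewrite T1, T2 in T. apply (f_equal fst) in T. cunf. lra. }
   assert (H1 : p1 = / 2) by lra. assert (H2 : p2 = / 2) by lra.
   assert (Hm : meq (d * b) rho1 rho2).
   { intros a a' Ha Ha'. specialize (Heq a a' Ha Ha'). rewrite H1, H2 in Heq.
     assert (F := f_equal fst Heq). assert (S := f_equal snd Heq). apply Cext; cunf; lra. }
   split; auto. split; auto. split; auto.
   apply (sep_meq _ _ (rhoABC (/ 2) (/ 2) rho1 rho1)).
   apply sep_final; auto.
   rewrite H1, H2. apply rho_meq2; auto. }
 split; [lra | split; [exact Eq |]].
 intros [Hns Hnd]. destruct (Rle_lt_or_eq_dec _ _ Hle) as [Hlt | Heq2].
 - apply Hnd, Hdist, Hlt.
 - apply Hns. apply Eq. auto.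
Qed.
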